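(* Let $(\mathcal V,\mathcal W,\lambda)$ be a FTvN system with center $C$. Then $\lambda(C)=\lambda(\mathcal V)\cap-\lambda(\mathcal V)$, i.e., $\lambda(C)$ is the lineality space of the convex cone $\lambda(\mathcal V)$. Consequently: (a) $\lambda(\mathcal V)$ is pointed if and only if $C=\{0\}$; (b) $\lambda(\mathcal V)$ is a linear subspace of $\mathcal W$ if and only if $C=\mathcal V$.
   Context: A Fan-Theobald-von Neumann (FTvN) system is a triple $(\mathcal V,\mathcal W,\lambda)$ where $\mathcal V,\mathcal W$ are real inner product spaces and $\lambda:\mathcal V\to\mathcal W$ is a map such that: (A1) $\|\lambda(x)\|=\|x\|$ for all $x$; (A2) $\langle x,y\rangle\le\langle\lambda(x),\lambda(y)\rangle$ for all $x,y$; (A3) for every $c\in\mathcal V$ and $q\in\lambda(\mathcal V)$ there exists $x$ with $\lambda(x)=q$ and $\langle c,x\rangle=\langle\lambda(c),\lambda(x)\rangle$. Elements $x,y$ commute if $\langle x,y\rangle=\langle\lambda(x),\lambda(y)\rangle$; the center $C$ is the set of elements commuting with every element of $\mathcal V$. A cone $K$ is pointed if $K\cap -K=\{0\}$. *)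

(* Defs.v *)
From HB Require Import structures.
From mathcomp Require Import all_boot all_order all_algebra.
From mathcomp Require Import boolp classical_sets reals.
Set Implicit Arguments. Unset Strict Implicit. Unset Printing Implicit Defensive.
Import Order.TTheory GRing.Theory Num.Theory.
Local Open Scope ring_scope.
Local Open Scope classical_set_scope.

Record inner_product (R : realType) (V : lmodType R) := InnerProduct {
  ip :> V -> V -> R;
  ip_sym : forall x y, ip x y = ip y x;
  ip_linl : forall (a : R) (x y z : V), ip (a *: x + y) z = a * ip x z + ip y z;
  ip_ge0 : forall x, 0 <= ip x x;
  ip_eq0 : forall x, ip x x = 0 -> x = 0
}.

Definition ipnorm (R : realType) (V : lmodType R) (ipV : inner_product V) (x : V) : R :=
  Num.sqrt (ipV x x).

Definition FTvN_system (R : realType) (V W : lmodType R)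
  (ipV : inner_product V) (ipW : inner_product W) (lam : V -> W) : Prop :=
  [/\ (* A1 *) forall x, ipnorm ipW (lam x) = ipnorm ipV x,
      (* A2 *) forall x y, ipV x y <= ipW (lam x) (lam y) &
      (* A3 *) forall (c : V) (q : W), range lam q ->
                 exists x, lam x = q /\ ipV c x = ipW (lam c) (lam x)].

Definition commute_FTvN (R : realType) (V W : lmodType R)
  (ipV : inner_product V) (ipW : inner_product W) (lam : V -> W) (x y : V) : Prop :=
  ipV x y = ipW (lam x) (lam y).

Definition FTvN_center (R : realType) (V W : lmodType R)
  (ipV : inner_product V) (ipW : inner_product W) (lam : V -> W) : set V :=
  [set c | forall x, commute_FTvN ipV ipW lam c x].

Definition set_opp (R : realType) (W : lmodType R) (K : set W) : set W :=
  [set - w | w in K].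

Definition pointed (R : realType) (W : lmodType R) (K : set W) : Prop :=
  K `&` set_opp K = [set 0].

Definition linear_subspace (R : realType) (W : lmodType R) (S : set W) : Prop :=
  [/\ S 0, (forall x y, S x -> S y -> S (x + y)) &
      (forall (a : R) x, S x -> S (a *: x))].

(* Main.v *)
Require Import Defs.
From HB Require Import structures.
From mathcomp Require Import all_boot all_order all_algebra.
From mathcomp Require Import boolp classical_sets reals.
From mathcomp Require Import ring lra.
Import Order.TTheory GRing.Theory Num.Theory.
Local Open Scope ring_scope.
Local Open Scope classical_set_scope.

Section IP.
Variables (R : realType) (V : lmodType R) (i : inner_product V).

Lemma ip0l z : i 0 z = 0.
Proof.
have := @ip_linl _ _ i 1 0 0 z; rewrite scale1r addr0 mul1r; lra.
Qed.

Lemma ipDl x y z : i (x + y) z = i x z + i y z.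
Proof. by have := @ip_linl _ _ i 1 x y z; rewrite scale1r mul1r. Qed.

Lemma ipZl a x z : i (a *: x) z = a * i x z.
Proof. by have := @ip_linl _ _ i a x 0 z; rewrite addr0 ip0l addr0. Qed.

Lemma ipNl x z : i (- x) z = - i x z.
Proof. by rewrite -scaleN1r ipZl mulN1r. Qed.

Lemma ipDr x y z : i z (x + y) = i z x + i z y.
Proof. by rewrite ip_sym ipDl !(@ip_sym _ _ i z). Qed.

Lemma ipZr a x z : i z (a *: x) = a * i z x.
Proof. by rewrite ip_sym ipZl (@ip_sym _ _ i z). Qed.

Lemma ipNr x z : i z (- x) = - i z x.
Proof. by rewrite ip_sym ipNl (@ip_sym _ _ i z). Qed.

Lemma ip0r z : i z 0 = 0.
Proof. by rewrite ip_sym ip0l. Qed.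

End IP.

Section Main.
Variables (R : realType) (V W : lmodType R)
  (ipV : inner_product V) (ipW : inner_product W) (lam : V -> W).
Hypothesis FT : FTvN_system ipV ipW lam.

Lemma A1' x : ipW (lam x) (lam x) = ipV x x.
Proof.
case: FT => A1 _ _; have := A1 x; rewrite /ipnorm => /(congr1 (fun t => t ^+ 2)).
by rewrite !sqr_sqrtr ?ip_ge0.
Qed.

Lemma A2' x y : ipV x y <= ipW (lam x) (lam y).
Proof. by case: FT. Qed.

Lemma lam0 : lam 0 = 0.
Proof. by apply: (@ip_eq0 _ _ ipW); rewrite A1' ip0l. Qed.

Lemma key0 u v : lam u + lam v = 0 -> u + v = 0.
Proof.
move=> H; apply: (@ip_eq0 _ _ ipV).
have h0 := @ip_ge0 _ _ ipV (u + v).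
have : ipW (lam u + lam v) (lam u + lam v) = 0 by rewrite H ip0l.
rewrite !ipDl !ipDr !A1' (@ip_sym _ _ ipW (lam v)) => E.
move: h0; rewrite !ipDl !ipDr (@ip_sym _ _ ipV v) => h0.
have := A2' u v; lra.
Qed.

Lemma keyC u v : lam u + lam v = 0 -> FTvN_center ipV ipW lam u.
Proof.
move=> H z; rewrite /commute_FTvN.
have Hv : v = - u by apply/eqP; rewrite -subr_eq0 opprK addrC key0.
have Hl : lam v = - lam u by apply/eqP; rewrite -subr_eq0 opprK addrC H.
have := A2' u z; have := A2' v z; rewrite Hl ipNl Hv ipNl; lra.
Qed.

Lemma centerN c : FTvN_center ipV ipW lam c -> lam c + lam (- c) = 0.
Proof.
move=> Hc; apply: (@ip_eq0 _ _ ipW).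
have := Hc (- c); rewrite /commute_FTvN => E.
rewrite !ipDl !ipDr !A1' (@ip_sym _ _ ipW (lam (- c))) -E !ipNl !ipNr opprK; ring.
Qed.

Lemma main_eq : lam @` FTvN_center ipV ipW lam = range lam `&` set_opp (range lam).
Proof.
rewrite eqEsubset; split => q.
  case=> c Hc <-; split; first by exists c.
  exists (lam (- c)); first by exists (- c).
  by apply/eqP; rewrite eq_sym -subr_eq0 opprK centerN.
case=> [[u _ <-]] [w [v _ <-]] Hq.
exists u => //; apply: (@keyC u v).
by rewrite -Hq addrC subrr.
Qed.

Lemma center0 : FTvN_center ipV ipW lam 0.
Proof. by apply: (@keyC 0 0); rewrite lam0 addr0. Qed.

Lemma lam_eq0 x : lam x = 0 -> x = 0.
Proof. by move=> H; apply: (@ip_eq0 _ _ ipV); rewrite -A1' H ip0l. Qed.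

End Main.
Arguments main_eq {R V W ipV ipW lam}.
Arguments keyC {R V W ipV ipW lam}.
Arguments lam0 {R V W ipV ipW lam}.
Arguments lam_eq0 {R V W ipV ipW lam}.
Arguments center0 {R V W ipV ipW lam}.

Theorem corollary6p4 (R : realType) (V W : lmodType R)
  (ipV : inner_product V) (ipW : inner_product W) (lam : V -> W) :
  FTvN_system ipV ipW lam ->
  [/\ lam @` FTvN_center ipV ipW lam = range lam `&` set_opp (range lam),
      (pointed (range lam) <-> FTvN_center ipV ipW lam = [set 0]) &
      (linear_subspace (range lam) <-> FTvN_center ipV ipW lam = setT)].
Proof.
move=> FT; have ME := main_eq FT.
split => //.
- split.
  + rewrite /pointed -ME => P.
    rewrite eqEsubset; split => c.
      move=> Hc; have : [set 0] (lam c) by rewrite -P; exists c.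
      by move=> /= /(lam_eq0 FT).
    by move=> /= ->; exact: (center0 FT).
  + by move=> H; rewrite /pointed -ME H image_set1 (lam0 FT).
- split.
  + case=> _ _ HZ; rewrite eqEsubset; split => // x _.
    have [v _ Hv] : range lam ((-1) *: lam x) by apply: HZ; exists x.
    by apply: (keyC FT x v); rewrite Hv scaleN1r subrr.
  + move=> HC.
    have P x y : ipW (lam x) (lam y) = ipV x y.
      have : FTvN_center ipV ipW lam x by rewrite HC.
      by move=> /(_ y) ->.
    have Hadd x y : lam (x + y) = lam x + lam y.
      apply/eqP; rewrite -subr_eq0; apply/eqP; apply: (@ip_eq0 _ _ ipW).
      rewrite !(ipDl, ipDr, ipNl, ipNr, P) ?(ipDl, ipDr).
      rewrite (@ip_sym _ _ ipV y x); ring.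
    have Hsc a x : lam (a *: x) = a *: lam x.
      apply/eqP; rewrite -subr_eq0; apply/eqP; apply: (@ip_eq0 _ _ ipW).
      rewrite !(ipDl, ipDr, ipNl, ipNr, ipZl, ipZr, P) ?(ipZl, ipZr).
      ring.
    split.
    * by exists 0 => //; rewrite (lam0 FT).
    * by move=> _ _ [x _ <-] [y _ <-]; exists (x + y).
    * by move=> a _ [x _ <-]; exists (a *: x).
Qed.
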